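(* Let $n\ge1$, and for $j=1,\dots,n$ let $\hat\phi_j\in\mathbb{R}$, $\tilde\phi_j\ge 0$ and $0\le\underline{\xi}_j\le\overline{\xi}_j$. For $\mathbf{x}\in\mathbb{R}^n$, $\mathbf{x}\succeq\mathbf{0}$, define the worst-case squared position error bound $$\mathcal{P}_{\mathrm R}(\mathbf{x})=\max_{\substack{\phi_j\in[\hat\phi_j-\tilde\phi_j,\,\hat\phi_j+\tilde\phi_j]\\ \xi_j\in[\underline\xi_j,\,\overline\xi_j]}}\operatorname{tr}\Big\{\Big(\sum_{j=1}^n x_j\xi_j\mathbf{u}(\phi_j)\mathbf{u}(\phi_j)^{\mathsf T}\Big)^{-1}\Big\}$$ (the trace being $+\infty$ when the matrix is singular), let $\underline{\mathbf{R}}=\operatorname{diag}\{\underline\xi_1,\dots,\underline\xi_n\}$ and $B(\mathbf{x})=\tfrac14\,\mathcal{P}_{\mathrm R}(\mathbf{x})\cdot\mathbf{1}^{\mathsf T}\underline{\mathbf{R}}\mathbf{x}$. For a positive integer $M$, let $\vartheta_m=(2m+1)\pi/M$ for $m\in\mathcal{M}=\{0,1,\dots,M-1\}$, and let $\mathbf{h}_m,\mathbf{g}_m\in\mathbb{R}^n$ have $j$th entries $$[\mathbf{h}_m]_j=\max_{|\epsilon|\le2\tilde\phi_j}\cos(2\hat\phi_j-\vartheta_m+\epsilon),\qquad [\mathbf{g}_m]_j=\frac{[\mathbf{h}_m]_j}{\cos(\pi/M)}.$$ Define $$\underline{\mathcal{P}}_M(\mathbf{x})=\max_{m\in\mathcal{M}}\frac{4\cdot\mathbf{1}^{\mathsf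 T}\underline{\mathbf{R}}\mathbf{x}}{(\mathbf{1}^{\mathsf T}\underline{\mathbf{R}}\mathbf{x})^2-(\mathbf{h}_m^{\mathsf T}\underline{\mathbf{R}}\mathbf{x})^2},\qquad \overline{\mathcal{P}}_M(\mathbf{x})=\max_{m\in\mathcal{M}}\frac{4\cdot\mathbf{1}^{\mathsf T}\underline{\mathbf{R}}\mathbf{x}}{(\mathbf{1}^{\mathsf T}\underline{\mathbf{R}}\mathbf{x})^2-(\mathbf{g}_m^{\mathsf T}\underline{\mathbf{R}}\mathbf{x})^2}.$$ Then for any $\mathbf{x}\succeq\mathbf{0}$ with $\mathcal{P}_{\mathrm R}(\mathbf{x})<\infty$ and any $M\ge\pi\sqrt{B(\mathbf{x})}$, we have $\underline{\mathcal{P}}_M(\mathbf{x})\le\mathcal{P}_{\mathrm R}(\mathbf{x})\le\overline{\mathcal{P}}_M(\mathbf{x})$.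
   Context: $\mathbf{u}(\phi)=[\cos\phi\ \ \sin\phi]^{\mathsf T}$; $\mathbf{1}$ is the all-ones vector; $\mathbf{x}\succeq\mathbf{0}$ means entrywise nonnegative. This models one agent (with one uncertainty cell) in a wireless localization network with $n$ anchors: $\phi_j$ is the agent–anchor angle known to lie in $[\hat\phi_j-\tilde\phi_j,\hat\phi_j+\tilde\phi_j]$, $\xi_j$ the equivalent ranging coefficient known to lie in $[\underline\xi_j,\overline\xi_j]$, and $\mathbf{x}$ the anchor transmit power vector. *)

(* Defs.v *)
From HB Require Import structures.
From mathcomp Require Import all_boot all_order all_algebra.
From mathcomp Require Import all_classical all_reals all_analysis.
Set Implicit Arguments. Unset Strict Implicit. Unset Printing Implicit Defensive.
Import Order.TTheory GRing.Theory Num.Theory.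
Local Open Scope classical_set_scope.
Local Open Scope ring_scope.

Section Defs.
Variable R : realType.

Definition uvec (phi : R) : 'cV[R]_2 :=
  \col_(i < 2) (if i == ord0 then cos phi else sin phi).

Definition EFIM (n : nat) (x phi xi : 'I_n -> R) : 'M[R]_2 :=
  \sum_(j < n) (x j * xi j) *: (uvec (phi j) *m (uvec (phi j))^T).

Definition trinv (J : 'M[R]_2) : \bar R :=
  if J \in unitmx then (\tr (invmx J))%:E else +oo%E.

Definition PR (n : nat) (phihat phitil xilo xihi x : 'I_n -> R) : \bar R :=
  ereal_sup [set t | exists (phi xi : 'I_n -> R),
     (forall j, phihat j - phitil j <= phi j <= phihat j + phitil j) /\
     (forall j, xilo j <= xi j <= xihi j) /\
     t = trinv (EFIM x phi xi)].

Definition oneRx (n : nat) (xilo x : 'I_n -> R) : R := \sum_(j < n) xilo j * x j.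

(* B(x) = 1/4 P_R(x) 1^T Rlow x  (P_R(x) finite) *)
Definition Bx (n : nat) (phihat phitil xilo xihi x : 'I_n -> R) : R :=
  4^-1 * fine (PR phihat phitil xilo xihi x) * oneRx xilo x.

Definition vartheta (M m : nat) : R := (2 * m + 1)%:R * pi / M%:R.

Definition hm (n M m : nat) (phihat phitil : 'I_n -> R) (j : 'I_n) : R :=
  sup [set cos (2 * phihat j - vartheta M m + eps) | eps in [set eps : R | `|eps| <= 2 * phitil j]].

Definition gm (n M m : nat) (phihat phitil : 'I_n -> R) (j : 'I_n) : R :=
  hm M m phihat phitil j / cos (pi / M%:R).

Definition Pterm (n : nat) (xilo x v : 'I_n -> R) : R :=
  4 * oneRx xilo x / (oneRx xilo x ^+ 2 - (\sum_(j < n) v j * xilo j * x j) ^+ 2).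

Definition Plow (n M : nat) (phihat phitil xilo x : 'I_n -> R) : \bar R :=
  \big[Order.max/-oo%E]_(m < M) (Pterm xilo x (hm M m phihat phitil))%:E.

Definition Pup (n M : nat) (phihat phitil xilo x : 'I_n -> R) : \bar R :=
  \big[Order.max/-oo%E]_(m < M) (Pterm xilo x (gm M m phihat phitil))%:E.

End Defs.

(* Main.v *)
Require Import Defs.
From HB Require Import structures.
From mathcomp Require Import all_boot all_order all_algebra.
From mathcomp Require Import all_classical all_reals all_analysis.
Import Order.TTheory GRing.Theory Num.Theory.
Local Open Scope classical_set_scope.
Local Open Scope ring_scope.
From mathcomp Require Import ring lra.
Import numFieldNormedType.Exports.

Lemma det22 (R : comNzRingType) (A : 'M[R]_2) : \det A = A 0 0 * A 1 1 - A 0 1 * A 1 0.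
Proof.
rewrite (expand_det_row _ 0) !big_ord_recl big_ord0 /cofactor !det_mx11 !mxE /=.
have e1 : lift (0 : 'I_2) (0 : 'I_1) = 1 by apply/val_inj.
have e2 : lift (ord0 : 'I_2) (0 : 'I_1) = 1 by apply/val_inj.
have e3 : lift (ord0 : 'I_2) (ord0 : 'I_1) = 1 by apply/val_inj.
have e4 : lift (1 : 'I_2) (0 : 'I_1) = 0 by apply/val_inj.
by rewrite ?e1 ?e2 ?e3 ?e4 /= ?expr0 ?expr1 ?addr0 ?mul1r ?mulN1r ?mulrN.
Qed.

Lemma tradj22 (R : comNzRingType) (A : 'M[R]_2) : \tr (\adj A) = A 0 0 + A 1 1.
Proof.
rewrite /mxtrace !big_ord_recl big_ord0 !mxE /cofactor !det_mx11 !mxE /=.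
have e2 : lift (ord0 : 'I_2) (0 : 'I_1) = 1 by apply/val_inj.
have e5 : lift (lift (ord0 : 'I_2) (ord0 : 'I_1)) (0 : 'I_1) = 0 by apply/val_inj.
rewrite e5 e2 /bump /= expr0 mul1r expr2 mulN1r opprK mul1r addr0.
by rewrite addrC.
Qed.

Section S.
Variable R : realType.

Lemma EFIM_E n (x phi xi : 'I_n -> R) i j :
  EFIM x phi xi i j = \sum_k (x k * xi k) * (uvec (phi k) i 0 * uvec (phi k) j 0).
Proof.
rewrite /EFIM summxE; apply: eq_bigr => k _.
by rewrite !mxE big_ord1 !mxE.
Qed.

Definition Sx {n} (w : 'I_n -> R) := \sum_j w j.
Definition Xc {n} (w phi : 'I_n -> R) := \sum_j w j * cos (2 * phi j).
Definition Ys {n} (w phi : 'I_n -> R) := \sum_j w j * sin (2 * phi j).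
Definition Dl {n} (w phi : 'I_n -> R) := Sx w ^+ 2 - Xc w phi ^+ 2 - Ys w phi ^+ 2.

Lemma trinv_E n (x phi xi : 'I_n -> R) :
  trinv (EFIM x phi xi) =
  if Dl (fun j => x j * xi j) phi == 0 then +oo%E
  else (4 * Sx (fun j => x j * xi j) / Dl (fun j => x j * xi j) phi)%:E.
Proof.
set w := fun j => x j * xi j.
set J := EFIM x phi xi.
have J00 : J 0 0 = \sum_k w k * (cos (phi k) ^+ 2).
  by rewrite /J EFIM_E; apply: eq_bigr => k _; rewrite !mxE /= expr2.
have J11 : J 1 1 = \sum_k w k * (sin (phi k) ^+ 2).
  by rewrite /J EFIM_E; apply: eq_bigr => k _; rewrite !mxE /= expr2.
have J01 : J 0 1 = \sum_k w k * (cos (phi k) * sin (phi k)).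
  by rewrite /J EFIM_E; apply: eq_bigr => k _; rewrite !mxE.
have J10 : J 1 0 = \sum_k w k * (cos (phi k) * sin (phi k)).
  rewrite /J EFIM_E; apply: eq_bigr => k _; rewrite !mxE /=. by rewrite /w [sin _ * _]mulrC.
have ES : Sx w = J 0 0 + J 1 1.
  rewrite J00 J11 -big_split /=; apply: eq_bigr => k _.
  by rewrite -mulrDr cos2Dsin2 mulr1.
have EX : Xc w phi = J 0 0 - J 1 1.
  rewrite J00 J11 -sumrB /=; apply: eq_bigr => k _.
  by rewrite mulr_natl mulr2n cosD -mulrBr !expr2.
have EY : Ys w phi = 2 * J 0 1.
  rewrite J01 mulr_sumr; apply: eq_bigr => k _.
  rewrite mulr_natl mulr2n sinD; ring.
have Edet : Dl w phi = 4 * \det J.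
  rewrite /Dl det22 ES EX EY J10 -J01; ring.
rewrite /trinv unitmxE unitfE Edet mulf_eq0 pnatr_eq0 /=.
case: ifPn => H1; case: ifPn => H2 //.
1,3: by case/negP: H1; exact: H2.
rewrite /invmx unitmxE unitfE H1 mxtraceZ tradj22 -ES.
congr (_%:E); field; exact: H1.
Qed.


Lemma Sx_ge0 n (w : 'I_n -> R) : (forall j, 0 <= w j) -> 0 <= Sx w.
Proof. by move=> w0; apply: sumr_ge0 => j _. Qed.

Lemma XY_le n (w phi : 'I_n -> R) : (forall j, 0 <= w j) ->
  [/\ Xc w phi <= Sx w, - Xc w phi <= Sx w, Ys w phi <= Sx w & - Ys w phi <= Sx w].
Proof.
move=> w0; rewrite /Xc /Ys /Sx -!sumrN; split; apply: ler_sum => j _.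
- by have := cos_le1 (2 * phi j); have := w0 j; nra.
- by have := cos_geN1 (2 * phi j); have := w0 j; nra.
- by have := sin_le1 (2 * phi j); have := w0 j; nra.
- by have := sin_geN1 (2 * phi j); have := w0 j; nra.
Qed.

Lemma Dl_ge0 n (w phi : 'I_n -> R) : (forall j, 0 <= w j) -> 0 <= Dl w phi.
Proof.
move=> w0.
set S := Sx w; set X := Xc w phi; set Y := Ys w phi.
have E j : w j * ((S * cos (2 * phi j) - X)^+2 + (S * sin (2 * phi j) - Y)^+2) =
   S^+2 * w j - 2 * S * X * (w j * cos (2 * phi j)) - 2 * S * Y * (w j * sin (2 * phi j))
   + (X^+2 + Y^+2) * w j.
  have h := cos2Dsin2 (2 * phi j).
  have -> : S^+2 * w j = S^+2 * w j * (cos (2 * phi j) ^+ 2 + sin (2 * phi j) ^+ 2)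
    by rewrite h mulr1.
  ring.
have key : \sum_j w j * ((S * cos (2 * phi j) - X)^+2 + (S * sin (2 * phi j) - Y)^+2)
   = S * Dl w phi.
  rewrite (eq_bigr _ (fun j _ => E j)) big_split /= !sumrB -!mulr_sumr.
  rewrite -/(Sx w) -/(Xc w phi) -/(Ys w phi) -/S -/X -/Y /Dl -/S -/X -/Y; ring.
have h0 : 0 <= S * Dl w phi.
  rewrite -key; apply: sumr_ge0 => j _; apply: mulr_ge0 => //.
  by apply: addr_ge0; apply: sqr_ge0.
have S0 : 0 <= S by exact: Sx_ge0.
have [Sp|S00] := ltP 0 S; first by rewrite -(pmulr_rge0 _ Sp).
have Sz : S = 0 by apply/le_anti; rewrite S0 S00.
have [h1 h2 h3 h4] := @XY_le n w phi w0.
rewrite /Dl -/S -/X -/Y.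
have Xz : X = 0 by apply/le_anti; rewrite -/S -/X in h1 h2; lra.
have Yz : Y = 0 by apply/le_anti; rewrite -/S -/Y in h3 h4; lra.
by rewrite Sz Xz Yz; lra.
Qed.


Lemma mono_alg (S X Y T U V : R) : 0 < S -> 0 < S^+2 - X^+2 - Y^+2 -> 0 <= T ->
  U^+2 + V^+2 <= T^+2 ->
  (S+T) * (S^+2 - X^+2 - Y^+2) <= S * ((S+T)^+2 - (X+U)^+2 - (Y+V)^+2).
Proof.
move=> S0 D0 T0 UV.
have A : 2 * S * (X * U + Y * V) <= T * (S^+2 + X^+2 + Y^+2).
  have [Tp|T00] := ltP 0 T.
    have B : 2 * S * T * (X * U + Y * V) <= T^+2 * (X^+2 + Y^+2) + S^+2 * T^+2.
      have h1 : 0 <= (T * X - S * U)^+2 + (T * Y - S * V)^+2.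
        by apply: addr_ge0; apply: sqr_ge0.
      have h2 : S^+2 * (U^+2 + V^+2) <= S^+2 * T^+2.
        by apply: ler_wpM2l => //; apply: sqr_ge0.
      nra.
    rewrite -(ler_pM2l Tp); nra.
  have Tz : T = 0 by apply/le_anti; rewrite T0 T00.
  rewrite Tz expr0n /= in UV.
  have Uz : U = 0 by nra.
  have Vz : V = 0 by nra.
  rewrite Uz Vz Tz; lra.
have C : S * (U^+2 + V^+2) <= S * T^+2 by apply: ler_wpM2l => //; apply: ltW.
nra.
Qed.

Lemma mono_frac (S X Y T U V : R) : 0 < S -> 0 < S^+2 - X^+2 - Y^+2 -> 0 <= T ->
  U^+2 + V^+2 <= T^+2 ->
  0 < (S+T)^+2 - (X+U)^+2 - (Y+V)^+2 /\ 4 * (S+T) / ((S+T)^+2 - (X+U)^+2 - (Y+V)^+2) <= 4 * S / (S^+2 - X^+2 - Y^+2).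
Proof.
move=> S0 D0 T0 UV.
have h := @mono_alg S X Y T U V S0 D0 T0 UV.
have P : 0 < (S+T)^+2 - (X+U)^+2 - (Y+V)^+2.
  have : 0 < (S + T) * (S^+2 - X^+2 - Y^+2) by apply: mulr_gt0 => //; lra.
  move=> h'; have : 0 < S * ((S+T)^+2 - (X+U)^+2 - (Y+V)^+2) by lra.
  by rewrite pmulr_rgt0.
split => //.
rewrite ler_pdivrMr // mulrAC ler_pdivlMr //; nra.
Qed.


Lemma hm_spec n M m (phihat phitil : 'I_n -> R) j : 0 <= phitil j ->
  (forall e, `|e| <= 2 * phitil j ->
     cos (2 * phihat j - vartheta R M m + e) <= hm M m phihat phitil j) /\
  exists e, `|e| <= 2 * phitil j /\
     hm M m phihat phitil j = cos (2 * phihat j - vartheta R M m + e).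
Proof.
move=> p0.
set a := 2 * phihat j - vartheta R M m; set b := 2 * phitil j.
have b0 : 0 <= b by rewrite /b mulr_ge0.
set A := [set cos (a + e) | e in [set e : R | `|e| <= b]].
have -> : hm M m phihat phitil j = sup A by [].
have hub : has_ubound A.
  by exists 1 => y [e _ <-]; exact: cos_le1.
have ne : A !=set0 by exists (cos (a + 0)), 0 => //=; rewrite normr0.
have ub := ub_le_sup hub.
have part1 : forall e, `|e| <= b -> cos (a + e) <= sup A.
  by move=> e he; apply: ub; exists e.
split => //.
have [c cin cmax] : exists2 c, c \in `[- b, b]%R &
    forall t, t \in `[- b, b]%R -> cos (a + t) <= cos (a + c).
  apply: EVT_max; first lra.
  have cc : continuous (fun t : R => cos (a + t)).
    move=> e; apply: continuous_comp; last exact: continuous_cos.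
    by apply: cvgD; [exact: cvg_cst|exact: cvg_id].
  exact: (@continuous_subspaceT R R _ _ cc).
have cb : `|c| <= b by rewrite ler_norml; rewrite in_itv /= in cin.
exists c; split => //.
apply/le_anti; rewrite part1 // andbT.
apply: ge_sup => // y [e he <-]; apply: cmax.
by rewrite in_itv /= -ler_norml.
Qed.



Lemma sin_bound (u : R) : 0 <= u -> - u <= sin u <= u.
Proof.
move=> u0.
have [c _ hc] : exists2 c, c \in `[0, u]%R & sin u - sin 0 = cos c * (u - 0).
  apply: MVT_segment => //.
  by apply/continuous_subspaceT => e; exact: continuous_sin.
rewrite sin0 !subr0 in hc.
have := cos_le1 c; have := cos_geN1 c.
rewrite hc; nra.
Qed.

Lemma cos_lb (t : R) : 0 <= t -> 1 - t ^+ 2 / 2 <= cos t.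
Proof.
move=> t0.
have t2 : 0 <= t / 2 by rewrite divr_ge0.
have /andP[h1 h2] := @sin_bound _ t2.
have -> : t = t / 2 + t / 2 by field.
rewrite cosD.
have := cos2Dsin2 (t / 2).
have e : (t / 2 + t / 2) ^+ 2 / 2 = 2 * (t / 2) ^+ 2 by field.
rewrite e.
nra.
Qed.


Lemma polar (a b : R) : 0 < a ^+ 2 + b ^+ 2 -> exists th, [/\ 0 <= th, th < pi *+ 2,
   a = Num.sqrt (a ^+ 2 + b ^+ 2) * cos th & b = Num.sqrt (a ^+ 2 + b ^+ 2) * sin th].
Proof.
move=> q0.
set r := Num.sqrt (a ^+ 2 + b ^+ 2).
have r0 : 0 < r by rewrite sqrtr_gt0.
have r2 : r ^+ 2 = a ^+ 2 + b ^+ 2 by rewrite sqr_sqrtr // ltW.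
set c := a / r.
have ac : a = r * c by rewrite /c; field; rewrite gt_eqF.
have c1 : -1 <= c <= 1.
  have : c ^+ 2 <= 1.
    have : r ^+ 2 * c ^+ 2 <= r ^+ 2 * 1 by rewrite mulr1 -exprMn -ac r2; nra.
    by rewrite ler_pM2l // exprn_gt0.
  move=> h; apply/andP; split; nra.
have cin : c \in `[(-1), 1] by rewrite in_itv.
set t0 := acos c.
have ct0 : cos t0 = c by rewrite /t0 acosK.
have t0ge : 0 <= t0 by exact: acos_ge0.
have t0le : t0 <= pi by exact: acos_lepi.
have st0 : 0 <= sin t0 by apply: sin_ge0_pi; rewrite t0ge t0le.
have sq : (r * sin t0) ^+ 2 = b ^+ 2.
  have := cos2Dsin2 t0; rewrite ct0 => h.
  rewrite exprMn.
  have -> : sin t0 ^+ 2 = 1 - c ^+ 2 by lra.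
  rewrite mulrBr mulr1 -exprMn -ac r2; ring.
have rs0 : 0 <= r * sin t0 by rewrite mulr_ge0 // ltW.
have [b0|b0] := leP 0 b.
  exists t0; split => //.
  - by apply: le_lt_trans t0le _; rewrite mulr2n; have := pi_gt0 R; lra.
  - by rewrite ct0.
  - apply/le_anti/andP; split; nra.
exists (pi *+ 2 - t0); split.
- rewrite mulr2n; have := pi_gt0 R; lra.
- have : 0 < t0.
    apply: acos_gt0; case/andP: c1 => -> c1 /=; rewrite lt_neqAle c1 andbT.
    apply/eqP => ce; have ar : a = r by rewrite ac ce mulr1.
    have : b ^+ 2 = 0 by rewrite -ar in r2; lra.
    by move/eqP; rewrite sqrf_eq0 => /eqP bz; rewrite bz in b0; lra.
  lra.
- by rewrite cosB cos2pi sin2pi ct0 mul1r mul0r addr0.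
- rewrite sinB cos2pi sin2pi mul0r mul1r sub0r mulrN.
  apply/le_anti/andP; split; nra.
Qed.


Lemma cos_le_mono (x y : R) : 0 <= x -> x <= y -> y <= pi -> cos y <= cos x.
Proof.
move=> x0 xy ypi.
have xin : x \in `[0, pi] by rewrite in_itv /= x0 (le_trans xy).
have yin : y \in `[0, pi] by rewrite in_itv /= ypi (le_trans x0).
by rewrite leNgt ltr_cos // -leNgt.
Qed.

Lemma cos_abs (d : R) : cos `|d| = cos d.
Proof.
by have [d0|d0] := leP 0 d; [rewrite ger0_norm|rewrite ltr0_norm // cosN].
Qed.

Lemma angle_choice (M : nat) (a b : R) : (0 < M)%N -> exists2 m, (m < M)%N &
  Num.sqrt (a ^+ 2 + b ^+ 2) * cos (pi / M%:R) <=
  a * cos (vartheta R M m) + b * sin (vartheta R M m).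
Proof.
move=> M0.
have q0 : 0 <= a ^+ 2 + b ^+ 2 by apply: addr_ge0; apply: sqr_ge0.
have [qp|qz] := ltP 0 (a ^+ 2 + b ^+ 2); last first.
  have az : a = 0 by apply/eqP; rewrite -sqrf_eq0; apply/eqP; nra.
  have bz : b = 0 by apply/eqP; rewrite -sqrf_eq0; apply/eqP; nra.
  by exists 0%N => //; rewrite az bz expr0n /= add0r sqrtr0 !mul0r add0r.
have [th [th0 th2 ea eb]] := @polar a b qp.
set r := Num.sqrt (a ^+ 2 + b ^+ 2) in ea eb *.
have r0 : 0 <= r by exact: sqrtr_ge0.
set K : R := M%:R.
have K1 : 1 <= K by rewrite /K ler1n.
have pi0 := pi_gt0 R.
have p2 : 0 < pi *+ 2 :> R by rewrite pmulrn_lgt0.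
set y := th * K / (pi *+ 2).
have y0 : 0 <= y by rewrite /y divr_ge0 // ?mulr_ge0 // ltW.
have /andP[hy1 hy2] := truncn_itv y0.
set m := Num.truncn y in hy1 hy2.
have hP1 : m%:R * (pi *+ 2) <= th * K by rewrite -ler_pdivlMr.
have hP2 : th * K < (m%:R + 1) * (pi *+ 2).
  by rewrite -ltr_pdivrMr //; move: hy2; rewrite -natr1.
have mM : (m < M)%N.
  rewrite -(ltr_nat R) -/K.
  have : m%:R * (pi *+ 2) < K * (pi *+ 2).
    apply: le_lt_trans hP1 _; rewrite mulrC ltr_pM2l //; lra.
  by rewrite ltr_pM2r.
exists m => //.
set v := vartheta R M m.
have Kv : K * v = (2 * m%:R + 1) * pi.
  rewrite /v /vartheta -/K natrD natrM; field; rewrite /K pnatr_eq0 -lt0n M0.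
  done.
set d := th - v.
have Kd : K * d = th * K - (2 * m%:R + 1) * pi by rewrite /d mulrBr Kv mulrC.
have dab : `|d| <= pi / K.
  have Kp : 0 < K by lra.
  have h : `|K * d| <= pi.
    rewrite Kd ler_norml.
    rewrite mulr2n in hP1 hP2; apply/andP; split; nra.
  rewrite normrM (ger0_norm (ltW Kp)) in h.
  by rewrite ler_pdivlMr // mulrC.
have piK : pi / K <= pi by rewrite ler_pdivrMr; [nra|lra].
have -> : a * cos v + b * sin v = r * cos d by rewrite /d cosB ea eb; ring.
apply: ler_wpM2l => //.
by rewrite -(cos_abs d); apply: cos_le_mono.
Qed.


Lemma lin_add n (w d phi : 'I_n -> R) :
  [/\ Sx (fun j => w j + d j) = Sx w + Sx d,
      Xc (fun j => w j + d j) phi = Xc w phi + Xc d phi &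
      Ys (fun j => w j + d j) phi = Ys w phi + Ys d phi].
Proof.
by split; rewrite /Sx /Xc /Ys -big_split; apply: eq_bigr => j _ /=; rewrite ?mulrDl.
Qed.

Lemma frac_mono (c A B : R) : 0 <= c -> 0 < B -> B <= A -> c / A <= c / B.
Proof.
move=> c0 B0 BA; apply: ler_wpM2l => //.
by rewrite lef_pV2 // ?posrE // (lt_le_trans B0).
Qed.

Lemma sum_cos_split n (w phi : 'I_n -> R) (v : R) :
  \sum_j w j * cos (2 * phi j - v) = Xc w phi * cos v + Ys w phi * sin v.
Proof.
rewrite /Xc /Ys !mulr_suml -big_split; apply: eq_bigr => j _ /=.
rewrite cosB; ring.
Qed.


Lemma cs2 (a b v : R) : (a * cos v + b * sin v) ^+ 2 <= a ^+ 2 + b ^+ 2.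
Proof.
have h := cos2Dsin2 v.
have e : (a * cos v + b * sin v) ^+ 2 + (a * sin v - b * cos v) ^+ 2 =
   (a ^+ 2 + b ^+ 2) * (cos v ^+ 2 + sin v ^+ 2) by ring.
rewrite h mulr1 in e.
have := sqr_ge0 (a * sin v - b * cos v); lra.
Qed.

End S.
Arguments Sx {R n}.
Arguments Xc {R n}.
Arguments Ys {R n}.
Arguments Dl {R n}.


Theorem proposition4 (R : realType) (n : nat) (phihat phitil xilo xihi : 'I_n -> R)
  (x : 'I_n -> R) (M : nat) :
  (1 <= n)%N ->
  (forall j, 0 <= phitil j) ->
  (forall j, 0 <= xilo j <= xihi j) ->
  (forall j, 0 <= x j) ->
  (PR phihat phitil xilo xihi x < +oo)%E ->
  (0 < M)%N ->
  pi * Num.sqrt (Bx phihat phitil xilo xihi x) <= M%:R ->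
  (Plow M phihat phitil xilo x <= PR phihat phitil xilo xihi x <= Pup M phihat phitil xilo x)%E.
Proof.
move=> _ pt0 xi0 x0 PRfin M0 HM.
pose feas (phi : 'I_n -> R) := forall j, phihat j - phitil j <= phi j <= phihat j + phitil j.
pose feasx (xi : 'I_n -> R) := forall j, xilo j <= xi j <= xihi j.
set PRv := PR phihat phitil xilo xihi x in PRfin HM *.
have ub phi xi : feas phi -> feasx xi -> (trinv (EFIM x phi xi) <= PRv)%E.
  by move=> f1 f2; apply: ereal_sup_ubound; exists phi, xi.
have xlo : feasx xilo by move=> j; case/andP: (xi0 j) => _ ->; rewrite lexx.
have nd phi xi : feas phi -> feasx xi -> 0 < Dl (fun j => x j * xi j) phi.
  move=> f1 f2.
  have := ub phi xi f1 f2; rewrite trinv_E.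
  case: eqP => [_ h|/eqP dn0 _].
    by move: PRfin; rewrite (le_gtF h).
  rewrite lt_neqAle eq_sym dn0 /=; apply: Dl_ge0 => j.
  apply: mulr_ge0 => //; case/andP: (xi0 j) => h0 _; case/andP: (f2 j) => h1 _.
  exact: le_trans h1.
set w := fun j => x j * xilo j.
have w0 j : 0 <= w j by rewrite mulr_ge0 //; case/andP: (xi0 j).
set Sw := Sx w.
have oneE : oneRx xilo x = Sw by apply: eq_bigr => j _; rewrite mulrC.
have PtE v : Pterm xilo x v = 4 * Sw / (Sw ^+ 2 - (\sum_j w j * v j) ^+ 2).
  rewrite /Pterm oneE; congr (_ / (_ - _ ^+ 2)).
  by apply: eq_bigr => j _; rewrite /w; ring.
pose F phi := 4 * Sw / Dl w phi.
have Fub phi : feas phi -> ((F phi)%:E <= PRv)%E.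
  move=> f1; have := ub phi xilo f1 xlo; rewrite trinv_E.
  by have := nd phi xilo f1 xlo; rewrite -/w => /gt_eqF ->.
have fhat : feas phihat by move=> j; have h := pt0 j; apply/andP; split; lra.
have Swp : 0 < Sw.
  have := nd _ _ fhat xlo; rewrite -/w /Dl -/Sw => h.
  have S0 : 0 <= Sw by exact: Sx_ge0.
  rewrite lt_neqAle S0 andbT; apply/eqP => Sz; rewrite -Sz in h.
  have := sqr_ge0 (Xc w phihat); have := sqr_ge0 (Ys w phihat); nra.
have [P PE] : exists P, PRv = P%:E.
  move: (Fub _ fhat) PRfin; case E: PRv => [r| |] //; first by exists r.
have FP phi : feas phi -> F phi <= P by move=> f1; rewrite -lee_fin -PE; exact: Fub.
set H := fun m : nat => \sum_j w j * hm M m phihat phitil j.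
have Hge m phi : feas phi -> \sum_j w j * cos (2 * phi j - vartheta R M m) <= H m.
  move=> f1; apply: ler_sum => j _; apply: ler_wpM2l => //.
  have [h1 _] := @hm_spec R n M m phihat phitil j (pt0 j).
  have -> : 2 * phi j - vartheta R M m =
     2 * phihat j - vartheta R M m + 2 * (phi j - phihat j) by ring.
  apply: h1; rewrite ler_norml; have /andP[a1 a2] := f1 j; apply/andP; split; lra.
have Hstar m : exists phis, [/\ feas phis, 0 < Dl w phis,
    (F phis <= P) & H m = Xc w phis * cos (vartheta R M m) + Ys w phis * sin (vartheta R M m)].
  have : forall j, exists e, `|e| <= 2 * phitil j /\
     hm M m phihat phitil j = cos (2 * phihat j - vartheta R M m + e).
    by move=> j; have [_ h2] := @hm_spec R n M m phihat phitil j (pt0 j).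
  case/choice => e he.
  pose phis j := phihat j + e j / 2.
  have fs : feas phis.
    move=> j; have [h1 _] := he j; move: h1; rewrite ler_norml => /andP[a1 a2].
    rewrite /phis; apply/andP; split; lra.
  exists phis; split => //.
  - by have := nd _ _ fs xlo.
  - exact: FP.
  rewrite -sum_cos_split /H; apply: eq_bigr => j _; congr (_ * _).
  by have [_ ->] := he j; congr cos; rewrite /phis; field.
apply/andP; split.
  rewrite PE; apply: bigmax_le => [|m _]; first exact: leNye.
  rewrite lee_fin PtE.
  have -> : \sum_j w j * hm M m phihat phitil j = H m by [].
  have [phis [fs Dp FPs Hm]] := Hstar m.
  have cs := @cs2 R (Xc w phis) (Ys w phis) (vartheta R M m).
  rewrite -Hm in cs.
  apply: le_trans FPs; rewrite /F; apply: frac_mono => //.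
  - by rewrite mulr_ge0 // ltW.
  - by rewrite /Dl -/Sw; lra.
rewrite /PRv /PR; apply: ge_ereal_sup => t [phi [xi [f1 [f2 ->]]]].
have ndp := nd phi xi f1 f2.
pose d j := x j * (xi j - xilo j).
have d0 j : 0 <= d j.
  rewrite /d mulr_ge0 // subr_ge0; by case/andP: (f2 j).
have wd : (fun j => x j * xi j) = (fun j => w j + d j).
  by apply/funext => j; rewrite /w /d; ring.
rewrite trinv_E wd; rewrite wd in ndp; rewrite (gt_eqF ndp).
have [eS eX eY] := @lin_add R n w d phi.
have Dw := nd phi xilo f1 xlo; rewrite -/w in Dw.
have UV := @Dl_ge0 R n d phi d0.
rewrite /Dl eS eX eY -/Sw in ndp *; rewrite /Dl -/Sw in Dw UV.
have UV' : Xc d phi ^+ 2 + Ys d phi ^+ 2 <= Sx d ^+ 2 by lra.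
have [_ mf] := @mono_frac R _ _ _ _ _ _ Swp Dw (@Sx_ge0 R n d d0) UV'.
apply: (@le_trans _ _ (F phi)%:E); first by rewrite lee_fin /F /Dl -/Sw.
have [m mM hang] := @angle_choice R M (Xc w phi) (Ys w phi) M0.
apply: (@le_trans _ _ (Pterm xilo x (gm M (Ordinal mM) phihat phitil))%:E); last first.
  exact: (le_bigmax -oo%E (fun i : 'I_M => (Pterm xilo x (gm M i phihat phitil))%:E)).
rewrite lee_fin PtE /=.
pose c : R := cos (pi / M%:R).
have Gm : \sum_j w j * gm M m phihat phitil j = H m / c.
  by rewrite /H mulr_suml; apply: eq_bigr => j _; rewrite /gm mulrA.
rewrite Gm.
have [phis [fs Dps FPs Hm]] := Hstar m.
have Hlow : Xc w phi * cos (vartheta R M m) + Ys w phi * sin (vartheta R M m) <= H m.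
  by rewrite -sum_cos_split; exact: Hge.
have cs := @cs2 R (Xc w phis) (Ys w phis) (vartheta R M m).
rewrite -Hm in cs.
set Q := Xc w phis ^+ 2 + Ys w phis ^+ 2 in cs.
have DQ : Dl w phis = Sw ^+ 2 - Q by rewrite /Dl -/Sw /Q; ring.
rewrite DQ in Dps FPs.
set K : R := M%:R.
have Kp : 0 < K by rewrite /K ltr0n.
set u := pi / K.
have uK : u * K = pi by rewrite /u divfK // gt_eqF.
have cl : 1 - u ^+ 2 / 2 <= c by apply: cos_lb; rewrite /u divr_ge0 // ?ltW // pi_gt0.
set Bv := 4^-1 * P * Sw.
have HB : pi * Num.sqrt Bv <= K.
  by move: HM; rewrite /Bx -/PRv PE /= oneE.
have PD : 4 * Sw <= P * (Sw ^+ 2 - Q).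
  by rewrite -ler_pdivrMr //; move: FPs; rewrite /F DQ.
have BD : Sw ^+ 2 <= Bv * (Sw ^+ 2 - Q) by rewrite /Bv; nra.
have Bv0 : 0 <= Bv.
  have : 0 < Bv * (Sw ^+ 2 - Q) by apply: lt_le_trans BD; rewrite exprn_gt0.
  by rewrite pmulr_lgt0 // => /ltW.
have sB := sqr_sqrtr Bv0.
have sB0 := sqrtr_ge0 Bv.
have pi0 := pi_gt0 R.
have piB : pi ^+ 2 * Bv <= K ^+ 2.
  rewrite -sB -exprMn; rewrite ler_sqr ?nnegrE ?mulr_ge0 // ?ltW //.
have uB : u ^+ 2 * Bv <= 1.
  have : u ^+ 2 * Bv * K ^+ 2 <= 1 * K ^+ 2.
    rewrite mul1r -(mulrC (K ^+ 2)) mulrA -exprMn (mulrC K) uK; lra.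
  by rewrite ler_pM2r // exprn_gt0.
have uS : u ^+ 2 * Sw ^+ 2 <= Sw ^+ 2 - Q.
  have u20 : 0 <= u ^+ 2 by exact: sqr_ge0.
  have : u ^+ 2 * Sw ^+ 2 <= u ^+ 2 * (Bv * (Sw ^+ 2 - Q)) by apply: ler_wpM2l.
  move=> h; apply: le_trans h _; rewrite mulrA.
  have h2 : 0 <= Sw ^+ 2 - Q by lra.
  by rewrite -[X in _ <= X]mul1r; apply: ler_wpM2r.
have cA : Sw ^+ 2 + Q <= 2 * Sw ^+ 2 * c.
  have : 2 * Sw ^+ 2 * (1 - u ^+ 2 / 2) <= 2 * Sw ^+ 2 * c.
    by apply: ler_wpM2l => //; rewrite mulr_ge0 // sqr_ge0.
  move=> h; apply: le_trans h; lra.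
have Sw2 : 0 < Sw ^+ 2 by rewrite exprn_gt0.
have c0 : 0 < c.
  have : 0 < 2 * Sw ^+ 2 * c.
    apply: lt_le_trans cA; have := sqr_ge0 (Xc w phis); have := sqr_ge0 (Ys w phis).
    rewrite /Q; lra.
  by rewrite pmulr_rgt0 // mulr_gt0.
have HneS : H m != Sw.
  by apply/eqP => e; move: Dps; rewrite subr_gt0 ltNge -e cs.
have H2 : 2 * Sw * H m < Sw ^+ 2 + H m ^+ 2.
  have ne : (Sw - H m) ^+ 2 != 0 by rewrite sqrf_eq0 subr_eq0 eq_sym.
  have : 0 < (Sw - H m) ^+ 2 by rewrite lt_neqAle eq_sym ne sqr_ge0.
  nra.
have Hlt : H m < Sw * c.
  have : 2 * Sw * H m < 2 * Sw * (Sw * c).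
    apply: lt_le_trans H2 _.
    have : Sw ^+ 2 + H m ^+ 2 <= Sw ^+ 2 + Q by rewrite lerD2l.
    move=> h; apply: le_trans h _; apply: le_trans cA _.
    by rewrite (_ : 2 * Sw * (Sw * c) = 2 * Sw ^+ 2 * c) //; ring.
  by rewrite ltr_pM2l // mulr_gt0.
set rho := Num.sqrt (Xc w phi ^+ 2 + Ys w phi ^+ 2) in hang.
have rho0 : 0 <= rho by exact: sqrtr_ge0.
have rho2 : rho ^+ 2 = Xc w phi ^+ 2 + Ys w phi ^+ 2.
  by rewrite sqr_sqrtr // addr_ge0 // sqr_ge0.
have rG : rho <= H m / c by rewrite ler_pdivlMr //; exact: le_trans hang Hlow.
have GS : H m / c < Sw by rewrite ltr_pdivrMr.
set G := H m / c in rG GS *.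
rewrite /F; apply: frac_mono.
- by rewrite mulr_ge0 // ltW.
- have G0 : 0 <= G by exact: le_trans rG.
  by rewrite subr_gt0 ltr_pXn2r // ?nnegrE ?ltW.
- rewrite /Dl -/Sw -addrA -opprD -rho2 lerD2l lerN2 ler_pXn2r // ?nnegrE //.
  exact: le_trans rG.
Qed.
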